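(* $\mathfrak{r}_{\mathrm{game}}^{\mathrm{I}} \ge \max\{\mathfrak{r},\mathfrak{d}\}$.
   Context: For $x\subseteq\omega$ and $y\in[\omega]^\omega$, $y$ reaps $x$ if $y\subseteq^* x$ or $y\subseteq^*\omega\setminus x$ (where $A\subseteq^* B$ means $A\setminus B$ is finite). $\mathfrak{r}$ is the least size of $\mathcal{A}\subseteq[\omega]^\omega$ such that every $x\subseteq\omega$ is reaped by some member of $\mathcal{A}$. $\mathfrak{d}$ is the dominating number (least size of a family $\mathcal{D}\subseteq\omega^\omega$ such that every $x\in\omega^\omega$ is eventually dominated by some member of $\mathcal{D}$). For $\mathcal{A}\subseteq[\omega]^\omega$, the reaping game with respect to $\mathcal{A}$: at round $k$, Player I plays $n_k\in\omega$ with $n_0<n_1<\cdots$, and then Player II plays $i_k\in\{0,1\}$. Player II wins iff there is $A\in\mathcal{A}$ such that $\{n_k:k\in\omega\}\cap A=\{n_k: i_k=1\}$ and $A$ reaps $\{n_k:k\in\omega\}$. $\mathfrak{r}_{\mathrm{game}}^{\mathrm{I}}$ is the least $|\mathcal{A}|$ such that Player I has no winning strategy in the reaping game with respect to $\mathcal{A}$. *)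

(* Defs.v *)
(* Subsets of omega are represented by characteristic
   functions nat -> bool; families of subsets by predicates on them. *)
From Stdlib Require Import List Arith Bool.
Import ListNotations.

Definition subset_w := nat -> bool.

Definition finite_set (x : subset_w) : Prop :=
  exists N, forall n, x n = true -> n < N.

Definition infinite_set (x : subset_w) : Prop := ~ finite_set x.

Definition almost_sub (a b : subset_w) : Prop :=
  finite_set (fun n => a n && negb (b n)).

Definition compl (x : subset_w) : subset_w := fun n => negb (x n).

Definition reaps (y x : subset_w) : Prop :=
  infinite_set y /\ (almost_sub y x \/ almost_sub y (compl x)).

Definition family := subset_w -> Prop.
Definition infinite_family (A : family) : Prop :=
  forall y, A y -> infinite_set y.

Definition reaping_family (F : family) : Prop :=
  infinite_family F /\ forall x : subset_w, exists y, F y /\ reaps y x.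

Definition eventually_dominates (g f : nat -> nat) : Prop :=
  exists N, forall n, N <= n -> f n <= g n.
Definition dominating_family (D : (nat -> nat) -> Prop) : Prop :=
  forall f : nat -> nat, exists g, D g /\ eventually_dominates g f.

Definition card_le {S T : Type} (X : S -> Prop) (Y : T -> Prop) : Prop :=
  exists h : S -> T, (forall s, X s -> Y (h s)) /\
    (forall s1 s2, X s1 -> X s2 -> h s1 = h s2 -> s1 = s2).

Definition ge_reaping_number (A : family) : Prop :=
  exists F : family, reaping_family F /\ card_le F A.

Definition ge_dominating_number (A : family) : Prop :=
  exists D : (nat -> nat) -> Prop, dominating_family D /\ card_le D A.

(* ---- The reaping game ----
   A strategy for Player I maps the history of II's moves (i_0,...,i_{k-1})
   to I's move n_k.  Legality: the moves strictly increase. *)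
Definition strategyI := list bool -> nat.

Definition legal_strategyI (sigma : strategyI) : Prop :=
  forall (s : list bool) (b : bool), sigma s < sigma (s ++ [b]).

Fixpoint hist (i : nat -> bool) (k : nat) : list bool :=
  match k with
  | 0 => []
  | S k' => hist i k' ++ [i k']
  end.

Definition moveI (sigma : strategyI) (i : nat -> bool) (k : nat) : nat :=
  sigma (hist i k).

Definition played_set (sigma : strategyI) (i : nat -> bool) (m : nat) : Prop :=
  exists k, moveI sigma i k = m.

Definition II_wins (A : family) (sigma : strategyI) (i : nat -> bool) : Prop :=
  exists a, A a /\
    (forall m, (played_set sigma i m /\ a m = true) <->
               (exists k, moveI sigma i k = m /\ i k = true)) /\
    (exists x : subset_w, (forall m, x m = true <-> played_set sigma i m)
                          /\ reaps a x).

Definition winning_strategyI (A : family) (sigma : strategyI) : Prop :=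
  legal_strategyI sigma /\ forall i : nat -> bool, ~ II_wins A sigma i.

Definition I_has_no_winning_strategy (A : family) : Prop :=
  ~ exists sigma, winning_strategyI A sigma.

(* Main.v *)
Require Import Defs.
From Stdlib Require Import List Arith Bool Lia Classical ClassicalEpsilon FunctionalExtensionality.
Import ListNotations.

Lemma lmin_ex (x : subset_w) (n : nat) :
  exists m, (n <= m /\ x m = true /\ (forall j, n <= j < m -> x j = false))
            \/ (forall m', n <= m' -> x m' = false).
Proof.
  destruct (classic (exists m, n <= m /\ x m = true)) as [[m [H1 H2]]|H].
  - assert (G : forall d n0, n0 + d = m -> n <= n0 -> (forall j, n <= j < n0 -> x j = false) ->
       exists m', n <= m' /\ x m' = true /\ (forall j, n <= j < m' -> x j = false)).
    { induction d as [|d IH]; intros n0 E Hn Hf.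
      - exists n0. rewrite <- E in H2. rewrite Nat.add_0_r in H2. auto.
      - destruct (x n0) eqn:Ex.
        + exists n0. auto.
        + apply (IH (S n0)); [lia|lia|]. intros j Hj.
          destruct (Nat.eq_dec j n0); [subst; auto|apply Hf; lia]. }
    destruct (G (m - n) n) as [m' Hm']; [lia|lia|intros; lia|].
    exists m'. left. exact Hm'.
  - exists 0. right. intros m' Hm'. destruct (x m') eqn:E; auto.
    exfalso. apply H. eauto.
Qed.

Definition lmin (x : subset_w) (n : nat) : nat :=
  proj1_sig (constructive_indefinite_description _ (lmin_ex x n)).

Lemma lmin_spec x n : infinite_set x ->
  n <= lmin x n /\ x (lmin x n) = true /\ (forall j, n <= j < lmin x n -> x j = false).
Proof.
  intro Hi. unfold lmin. destruct (constructive_indefinite_description _ _) as [m [H|H]]; simpl.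
  - exact H.
  - exfalso. apply Hi. exists n. intros k Hk. destruct (le_lt_dec n k) as [l|l]; auto.
    rewrite H in Hk; [discriminate|exact l].
Qed.

Lemma hist_len i k : length (hist i k) = k.
Proof. induction k; simpl; auto. rewrite length_app; simpl; lia. Qed.

Lemma incr_lt (s : nat -> nat) : (forall k, s k < s (S k)) ->
  forall k j, k < j -> s k < s j.
Proof.
  intros H k j Hkj. induction Hkj. apply H. specialize (H m). lia.
Qed.

Lemma incr_le (s : nat -> nat) : (forall k, s k < s (S k)) ->
  forall k j, k <= j -> s k <= s j.
Proof.
  intros H k j Hkj. destruct (Nat.eq_dec k j). subst; lia.
  pose proof (incr_lt s H k j). lia.
Qed.

Lemma incr_ge (s : nat -> nat) : (forall k, s k < s (S k)) -> forall k, k <= s k.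
Proof. intros H k. induction k. lia. specialize (H k). lia. Qed.

Lemma get_play A sigma : I_has_no_winning_strategy A -> legal_strategyI sigma ->
  exists i, II_wins A sigma i.
Proof.
  intros H L. apply NNPP. intro C. apply H. exists sigma. split; auto.
  intros i Hi. apply C. eauto.
Qed.

Fixpoint enum (x : subset_w) (k : nat) : nat :=
  match k with 0 => lmin x 0 | S k' => lmin x (S (enum x k')) end.

Lemma enum_incr x : infinite_set x -> forall k, enum x k < enum x (S k).
Proof. intros Hi k. simpl. destruct (lmin_spec x (S (enum x k)) Hi) as [H _]. lia. Qed.

Lemma enum_in x : infinite_set x -> forall k, x (enum x k) = true.
Proof. intros Hi [|k]; simpl; apply lmin_spec; auto. Qed.

Lemma enum_cover x : infinite_set x -> forall k m, x m = true -> m <= enum x k ->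
  exists j, enum x j = m.
Proof.
  intros Hi k. induction k; intros m Hm Hle.
  - exists 0. simpl in *. destruct (lmin_spec x 0 Hi) as [_ [_ H3]].
    destruct (Nat.eq_dec m (lmin x 0)); auto. rewrite H3 in Hm; [discriminate|lia].
  - destruct (le_lt_dec m (enum x k)) as [l|l]; [apply IHk; auto|].
    exists (S k). simpl in *. destruct (lmin_spec x (S (enum x k)) Hi) as [_ [_ H3]].
    destruct (Nat.eq_dec m (lmin x (S (enum x k)))); auto. rewrite H3 in Hm; [discriminate|lia].
Qed.

Lemma reaping_part A : infinite_family A -> I_has_no_winning_strategy A ->
  reaping_family A.
Proof.
  intros HA Hno. split; auto. intro x.
  destruct (classic (finite_set x)) as [Hf|Hi].
  - destruct (get_play A (fun s => length s) Hno) as [i [a [Ha _]]].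
    { intros s b. rewrite length_app; simpl; lia. }
    exists a. split; auto. split; [apply HA; auto|]. right.
    destruct Hf as [N HN]. exists N. intros n Hn. apply HN.
    unfold compl in Hn. destruct (a n), (x n); simpl in *; auto; discriminate.
  - destruct (get_play A (fun s => enum x (length s)) Hno) as [i [a [Ha [_ [x' [Hx' Hr]]]]]].
    { intros s b. rewrite length_app; simpl. rewrite Nat.add_1_r. apply enum_incr; auto. }
    exists a. split; auto.
    assert (E : x' = x).
    { apply functional_extensionality. intro m.
      assert (x' m = true <-> x m = true).
      { rewrite Hx'. unfold played_set, moveI. split.
        - intros [k Hk]. rewrite hist_len in Hk. subst. apply enum_in; auto.
        - intro Hm. destruct (enum_cover x Hi m m Hm) as [j Hj].
          + pose proof (incr_ge _ (enum_incr x Hi) m). auto.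
          + exists j. rewrite hist_len. auto. }
      destruct (x' m), (x m); intuition. }
    subst. exact Hr.
Qed.

Fixpoint Msum (f : nat -> nat) (n : nat) : nat :=
  match n with 0 => f 0 | S n' => Msum f n' + f (S n') end.

Lemma Msum_ge f n : f n <= Msum f n.
Proof. destruct n; simpl; lia. Qed.

Lemma Msum_mono f n m : n <= m -> Msum f n <= Msum f m.
Proof. intro H. induction H; simpl; lia. Qed.

Fixpoint tau (f : nat -> nat) (r : list bool) : nat :=
  match r with
  | [] => 0
  | b :: r' => tau f r' + 1 + (if b then Msum f (tau f r') else 0)
  end.

Definition sig_d (f : nat -> nat) : strategyI := fun s => tau f (rev s).

Lemma sig_d_step f s b : sig_d f (s ++ [b]) = tau f (rev s) + 1 + (if b then Msum f (tau f (rev s)) else 0).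
Proof. unfold sig_d. rewrite rev_app_distr. reflexivity. Qed.

Lemma move_step f i k : moveI (sig_d f) i (S k) =
  moveI (sig_d f) i k + 1 + (if i k then Msum f (moveI (sig_d f) i k) else 0).
Proof. unfold moveI. simpl. apply sig_d_step. Qed.

Definition G (a : subset_w) (n : nat) : nat := lmin a (S (lmin a (S n))).

Lemma dom_play A f i : infinite_family A -> II_wins A (sig_d f) i ->
  exists a, A a /\ eventually_dominates (G a) f.
Proof.
  intros HA [a [Ha [Hint [x [Hx [Hinf Hr]]]]]].
  set (s := moveI (sig_d f) i) in *.
  assert (Hs : forall k, s k < s (S k)).
  { intro k. unfold s. rewrite move_step. lia. }
  exists a. split; auto.
  destruct Hr as [[N HN]|[N HN]].
  - exists N. intros n Hn.
    destruct (lmin_spec a (S n) Hinf) as [A1 [A2 _]].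
    set (m1 := lmin a (S n)) in *.
    destruct (lmin_spec a (S m1) Hinf) as [B1 [B2 _]].
    unfold G. fold m1. set (m2 := lmin a (S m1)) in *.
    assert (P1 : x m1 = true).
    { destruct (x m1) eqn:E; auto. assert (m1 < N) by (apply HN; rewrite A2, E; auto). lia. }
    assert (P2 : x m2 = true).
    { destruct (x m2) eqn:E; auto. assert (m2 < N) by (apply HN; rewrite B2, E; auto). lia. }
    destruct (proj1 (Hint m1) (conj (proj1 (Hx m1) P1) A2)) as [k [Hk Hik]].
    destruct (proj1 (Hx m2) P2) as [j Hj]. fold s in Hk, Hj.
    assert (k < j).
    { destruct (le_lt_dec j k) as [l|l]; auto. pose proof (incr_le s Hs j k l). lia. }
    pose proof (incr_le s Hs (S k) j H).
    pose proof (move_step f i k). fold s in H1. rewrite Hik in H1.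
    pose proof (Msum_ge f n). pose proof (Msum_mono f n (s k)). lia.
  - exfalso.
    assert (Hfalse : forall k, N <= s k -> i k = false).
    { intros k Hk. destruct (i k) eqn:E; auto.
      destruct (proj2 (Hint (s k)) (ex_intro _ k (conj eq_refl E))) as [Hp Ha'].
      assert (s k < N); [|lia]. apply HN. unfold compl.
      rewrite Ha'. rewrite (proj2 (Hx (s k)) Hp). reflexivity. }
    assert (Hcof : forall d, x (s N + d) = true).
    { induction d.
      - apply Hx. exists N. rewrite Nat.add_0_r. reflexivity.
      - apply Hx. apply Hx in IHd. destruct IHd as [k Hk]. exists (S k).
        pose proof (move_step f i k) as M. fold s in M, Hk |- *. rewrite M, Hk.
        rewrite Hfalse. lia.
        rewrite Hk. pose proof (incr_ge s Hs N). lia. }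
    destruct (lmin_spec a (N + s N) Hinf) as [C1 [C2 _]].
    assert (lmin a (N + s N) < N); [|lia]. apply HN. unfold compl. rewrite C2.
    replace (lmin a (N + s N)) with (s N + (lmin a (N + s N) - s N)) by lia.
    rewrite Hcof. reflexivity.
Qed.

Lemma dominating_part A : infinite_family A -> I_has_no_winning_strategy A ->
  ge_dominating_number A.
Proof.
  intros HA Hno.
  set (D := fun g : nat -> nat => exists a, A a /\ g = G a).
  exists D. split.
  - intro f. destruct (get_play A (sig_d f) Hno) as [i Hi].
    { intros s b. rewrite sig_d_step. unfold sig_d. lia. }
    destruct (dom_play A f i HA Hi) as [a [Ha Hd]]. exists (G a). split; auto.
    exists a; auto.
  - exists (fun g => match excluded_middle_informative (D g) with
                     | left H => proj1_sig (constructive_indefinite_description _ H)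
                     | right _ => fun _ => false end).
    split.
    + intros g Hg. destruct (excluded_middle_informative (D g)); [|contradiction].
      exact (proj1 (proj2_sig (constructive_indefinite_description _ d))).
    + intros g1 g2 H1 H2 E.
      destruct (excluded_middle_informative (D g1)); [|contradiction].
      destruct (excluded_middle_informative (D g2)); [|contradiction].
      pose proof (proj2 (proj2_sig (constructive_indefinite_description _ d))) as E1.
      pose proof (proj2 (proj2_sig (constructive_indefinite_description _ d0))) as E2.
      rewrite E1, E2, E. reflexivity.
Qed.

Theorem mainTheorem5 :
  forall A : family,
    infinite_family A ->
    I_has_no_winning_strategy A ->
    ge_reaping_number A /\ ge_dominating_number A.
Proof.
  intros A HA Hno. split.
  - exists A. split. apply reaping_part; auto.
    exists (fun a => a). split; auto.
  - apply dominating_part; auto.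
Qed.
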